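(* Let $0<\lambda_1<\cdots<\lambda_n$ be real numbers and let $r>0$. Then the $n\times n$ matrices \[ \left[\frac{1}{\mathcal A(\lambda_i,\lambda_j)^r}\right],\quad \left[H(\lambda_i,\lambda_j)^r\right],\quad \left[\frac{1}{\mathcal H_\nu(\lambda_i,\lambda_j)^r}\right]\ (0\leq\nu\leq 1,\ \nu\neq\tfrac12),\quad \left[\frac{1}{\mathcal B_\alpha(\lambda_i,\lambda_j)^r}\right]\ (0<\alpha<\infty) \] are totally positive, and the matrices \[ \left[\frac{1}{\mathcal H_{1/2}(\lambda_i,\lambda_j)^r}\right]\ \left(=\left[\frac{1}{\mathcal B_0(\lambda_i,\lambda_j)^r}\right]\right)\quad\text{and}\quad \left[\frac{1}{\mathcal B_\infty(\lambda_i,\lambda_j)^r}\right] \] are totally nonnegative.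
   Context: For positive reals $a,b$: the arithmetic mean $\mathcal A(a,b)=\frac{a+b}{2}$; the harmonic mean $H(a,b)=\frac{2ab}{a+b}$; the Heinz mean $\mathcal H_\nu(a,b)=\frac{a^\nu b^{1-\nu}+a^{1-\nu}b^\nu}{2}$ for $0\leq\nu\leq1$; the binomial mean $\mathcal B_\alpha(a,b)=\left(\frac{a^\alpha+b^\alpha}{2}\right)^{1/\alpha}$ for real $\alpha\neq0$, with $\mathcal B_0(a,b)=\sqrt{ab}$ and $\mathcal B_\infty(a,b)=\max(a,b)$. All matrices are indexed by $i,j=1,\ldots,n$. A matrix is totally positive (resp. totally nonnegative) if all its minors are positive (resp. nonnegative). *)

(* Defs.v *)
From mathcomp Require Import all_boot all_order all_algebra.
From mathcomp Require Import reals exp.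
Set Implicit Arguments. Unset Strict Implicit. Unset Printing Implicit Defensive.
Import Order.TTheory GRing.Theory Num.Theory.
Local Open Scope ring_scope.

Section Means.
Variable R : realType.

Definition amean (a b : R) : R := (a + b) / 2.
Definition hmean (a b : R) : R := 2 * a * b / (a + b).
Definition heinz (nu a b : R) : R :=
  (powR a nu * powR b (1 - nu) + powR a (1 - nu) * powR b nu) / 2.
(* binomial mean, alpha <> 0 *)
Definition binmean (alpha a b : R) : R :=
  powR ((powR a alpha + powR b alpha) / 2) alpha^-1.
Definition binmean0 (a b : R) : R := Num.sqrt (a * b).
Definition binmeanInf (a b : R) : R := Num.max a b.

Definition minor (n k : nat) (A : 'M[R]_n) (f g : 'I_k -> 'I_n) : R :=
  \det (\matrix_(i < k, j < k) A (f i) (g j)).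

Definition strictly_incr (n k : nat) (f : 'I_k -> 'I_n) : Prop :=
  forall i j : 'I_k, (i < j)%N -> (f i < f j)%N.

Definition totally_positive (n : nat) (A : 'M[R]_n) : Prop :=
  forall (k : nat) (f g : 'I_k -> 'I_n),
    (0 < k)%N -> strictly_incr f -> strictly_incr g -> 0 < minor A f g.

Definition totally_nonnegative (n : nat) (A : 'M[R]_n) : Prop :=
  forall (k : nat) (f g : 'I_k -> 'I_n),
    (0 < k)%N -> strictly_incr f -> strictly_incr g -> 0 <= minor A f g.

End Means.

(* Main.v *)
Require Import Defs.
From mathcomp Require Import all_boot all_order all_algebra.
From mathcomp Require Import boolp classical_sets functions reals topology normedtype derive realfun exp.
From mathcomp Require Import ring lra.
Set Implicit Arguments. Unset Strict Implicit. Unset Printing Implicit Defensive.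
Import Order.TTheory GRing.Theory Num.Theory numFieldNormedType.Exports.
Local Open Scope ring_scope.
Section S.
Variable R : realType.
Lemma dshift (y e t : R) : 0 < t + y ->
  is_derive t 1 (fun u : R => powR (u + y) e) (e * powR (t + y) (e - 1)).
Proof.
move=> ty.
have h1 : is_derive t 1 (fun u : R => u + y) 1 by exact: is_derive_shift.
have := @is_derive1_comp R (fun x => powR x e) (fun u => u + y) t _ _ (is_derive1_powR e ty) h1.
by rewrite mulr1.
Qed.

Lemma dterm (a b s t : R) : 0 < t + a -> 0 < t + b ->
  is_derive t 1 (fun u => powR (u + a) (-s) * powR (u + b) s)
    (s * (a - b) * powR (t + a) (-s - 1) * powR (t + b) (s - 1)).
Proof.
move=> ta tb.
have := is_deriveM (dshift (-s) ta) (dshift s tb).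
move=> H.
have -> : (fun u => powR (u + a) (-s) * powR (u + b) s) =
  (fun u => powR (u + a) (-s)) * (fun u => powR (u + b) s) by apply/funext.
apply: is_derive_eq.
rewrite /=.
have Ea : powR (t + a) (-s) = powR (t + a) (-s - 1) * (t + a).
  by rewrite -[X in _ = _ * X](powRr1 (ltW ta)) -powRD ?subrK // (gt_eqF ta) implybT.
have Eb : powR (t + b) s = powR (t + b) (s - 1) * (t + b).
  by rewrite -[X in _ = _ * X](powRr1 (ltW tb)) -powRD ?subrK // (gt_eqF tb) implybT.
rewrite Ea Eb /GRing.scale /=. ring.
Qed.

Lemma ZC (m : nat) : forall (s : R) (c y z : 'I_m -> R), 0 < s -> injective y ->
  (forall i j : 'I_m, (i < j)%N -> z i < z j) ->
  (forall i j, 0 < z i + y j) ->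
  (forall i, \sum_j c j * powR (z i + y j) (-s) = 0) ->
  forall j, c j = 0.
Proof.
elim: m => [|m IH] s c y z s0 yinj zinc zpos zero j; first by case: j.
pose l := (@ord_max m).
pose w := widen_ord (leqnSn m).
pose G := fun t => \sum_(j < m) c (w j) * (powR (t + y (w j)) (-s) * powR (t + y l) s) + c l.
have GF : forall t, (forall j, 0 < t + y j) ->
    G t = (\sum_j c j * powR (t + y j) (-s)) * powR (t + y l) s.
  move=> t tp; rewrite big_ord_recr /= mulrDl big_distrl /=; congr (_ + _).
    by apply: eq_bigr => i _; rewrite mulrA.
  rewrite -mulrA -powRD; last by rewrite (gt_eqF (tp l)) implybT.
  by rewrite addNr powRr0 mulr1.
pose c' := fun j : 'I_m => c (w j) * (s * (y (w j) - y l)).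
have dG : forall t, (forall j, 0 < t + y j) -> is_derive t 1 G
    (powR (t + y l) (s - 1) * \sum_(j < m) c' j * powR (t + y (w j)) (-(s + 1))).
  move=> t tp.
  have -> : G = (\sum_(j < m) (c (w j) \*: (fun u => powR (u + y (w j)) (-s) * powR (u + y l) s)))
           + cst (c l).
    by apply/funext => u; rewrite /G fct_sumE.
  have Hs := @is_derive_sum R R R m _ t 1 _ (fun j => is_deriveZ (c (w j)) (dterm s (tp (w j)) (tp l))).
  have := is_deriveD Hs (is_derive_cst (c l) t 1).
  move=> H; apply: is_derive_eq.
  rewrite addr0 big_distrr /=; apply: eq_bigr => i _.
  rewrite /c' opprD /GRing.scale /=.
  have E : powR (t + y (w i)) (- s - 1) = powR (t + y (w i)) (- s + - 1) by [].
  rewrite E; ring.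
have zmono : forall a b : 'I_m.+1, (a <= b)%N -> z a <= z b.
  move=> a b; rewrite leq_eqVlt => /orP[/eqP/val_inj->//|/zinc/ltW//].
have ex : forall i : 'I_m, exists xi, (z (w i) < xi < z (lift ord0 i)) /\ \sum_(j < m) c' j * powR (xi + y (w j)) (-(s + 1)) = 0.
  move=> i.
  have ab : z (w i) < z (lift ord0 i) by apply: zinc; by rewrite /= /bump /= add1n.
  have posx : forall x, z (w i) <= x -> forall j, 0 < x + y j.
    by move=> x hx j0; apply: (lt_le_trans (zpos (w i) j0)); rewrite lerD2r.
  have [xi xiI dxi] : exists2 xi, xi \in `]z (w i), z (lift ord0 i)[ & is_derive xi 1 G 0.
    apply: Rolle => //.
    - move=> x; rewrite in_itv /= => /andP[h1 _].
      by have [] := dG x (posx x (ltW h1)).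
    - apply: derivable_within_continuous => x; rewrite in_itv /= => /andP[h1 _].
      by have [] := dG x (posx x h1).
    - by rewrite !GF ?zero ?mul0r //; apply: posx => //; apply: ltW.
  exists xi; move: xiI; rewrite in_itv /= => /andP[h1 h2]; split; first by rewrite h1 h2.
  have d1 := dG xi (posx xi (ltW h1)).
  have : powR (xi + y l) (s - 1) * \sum_(j < m) c' j * powR (xi + y (w j)) (-(s + 1)) = 0.
    by rewrite -(@derive_val _ _ _ _ _ _ _ d1) (@derive_val _ _ _ _ _ _ _ dxi).
  move/eqP; rewrite mulf_eq0 => /orP[|/eqP//].
  by rewrite gt_eqF // powR_gt0 // posx //; apply: ltW.
have [xi Hxi] := fin_all_exists ex.
have c'0 : forall j, c' j = 0.
  apply: (IH (s + 1) c' (fun j => y (w j)) xi).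
  - by rewrite addr_gt0.
  - by move=> a b /yinj /(congr1 val) /= /val_inj.
  - move=> a b ab; have [/andP[_ h1] _] := Hxi a; have [/andP[h2 _] _] := Hxi b.
    apply: (lt_le_trans h1); apply: (le_trans _ (ltW h2)); apply: zmono.
    by rewrite /= /bump /= add1n.
  - move=> a b; have [/andP[h1 _] _] := Hxi a.
    by apply: (lt_trans (zpos (w a) (w b))); rewrite ltrD2r.
  - by move=> a; have [_ ->] := Hxi a.
have cw : forall j, c (w j) = 0.
  move=> j0; have := c'0 j0; rewrite /c' => /eqP; rewrite mulf_eq0 => /orP[/eqP//|].
  rewrite mulf_eq0 (gt_eqF s0) /= subr_eq0 => /eqP/yinj/(congr1 val) /=.
  by move=> h; move: (ltn_ord j0); rewrite h ltnn.
have cl : c l = 0.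
  have := zero ord0; rewrite big_ord_recr /= big1; last by move=> i _; rewrite cw mul0r.
  rewrite add0r => /eqP; rewrite mulf_eq0 => /orP[/eqP//|].
  by rewrite gt_eqF // powR_gt0.
case: (ltnP j m) => h.
  by have -> : j = w (Ordinal h) by apply: val_inj.
have -> : j = l by apply: val_inj => /=; apply/eqP; rewrite eqn_leq h -ltnS ltn_ord.
exact: cl.
Qed.

Lemma yinj_of (k : nat) (y : 'I_k -> R) :
  (forall i j : 'I_k, (i < j)%N -> y i < y j) -> injective y.
Proof.
move=> yinc a b e; apply: val_inj; case: (ltngtP a b) => // h.
  by have := yinc _ _ h; rewrite e ltxx.
by have := yinc _ _ h; rewrite e ltxx.
Qed.


Lemma CT (k : nat) : forall (s : R) (x y : 'I_k -> R), 0 < s ->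
  (forall i j : 'I_k, (i < j)%N -> x i < x j) ->
  (forall i j : 'I_k, (i < j)%N -> y i < y j) ->
  (forall i j, 0 < x i + y j) ->
  0 < \det (\matrix_(i, j) powR (x i + y j) (-s)).
Proof.
elim: k => [|k IH] s x y s0 xinc yinc pos; first by rewrite det_mx00.
pose M := fun t => (\matrix_(i, j) powR ((if i == ord0 then t else x i) + y j) (-s)) : 'M[R]_k.+1.
pose C := fun j => cofactor (M (x ord0)) ord0 j.
pose f := fun t => \sum_j C j * powR (t + y j) (-s).
have Mt : forall t, \det (M t) = f t.
  move=> t; rewrite (expand_det_row _ ord0); apply: eq_bigr => j _.
  rewrite /M mxE eqxx mulrC; congr (_ * _).
  rewrite /C /cofactor; congr (_ * _); congr (\det _); apply/matrixP => a b.
  by rewrite !mxE eq_sym (negbTE (neq_lift _ _)).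
have M0 : M (x ord0) = \matrix_(i,j) powR (x i + y j) (-s).
  by apply/matrixP => a b; rewrite !mxE; case: eqP => // ->.
have C0 : 0 < C ord0.
  rewrite /C /cofactor /= expr0 mul1r.
  have -> : row' ord0 (col' ord0 (M (x ord0))) =
      \matrix_(i,j) powR (x (lift ord0 i) + y (lift ord0 j)) (-s).
    by apply/matrixP => a b; rewrite !mxE eq_sym (negbTE (neq_lift _ _)).
  apply: IH => // a b ab; [apply: xinc|apply: yinc]; by rewrite /= /bump /= !add1n.
have fz : forall i : 'I_k.+1, i != ord0 -> f (x i) = 0.
  move=> i i0; rewrite -Mt; apply: (determinant_alternate (i1 := ord0) (i2 := i)).
    by rewrite eq_sym.
  by move=> j; rewrite !mxE eqxx (negbTE i0).
rewrite -M0 Mt ltNge; apply/negP => fle.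
have fder : forall t, (forall j, 0 < t + y j) -> derivable f t 1.
  move=> t tp.
  have -> : f = \sum_j (C j \*: (fun u => powR (u + y j) (-s))).
    by apply/funext => u; rewrite /f fct_sumE.
  have Hs := @is_derive_sum R R R k.+1 _ t 1 _ (fun j => is_deriveZ (C j) (dshift (-s) (tp j))).
  by case: Hs.
pose B := \sum_(j < k) `|C (lift ord0 j)| * powR (y (lift ord0 j) - y ord0) (-s).
have B0 : 0 <= B by apply: sumr_ge0 => j _; rewrite mulr_ge0 // powR_ge0.
pose q := C ord0 / (B + 1).
have q0 : 0 < q by rewrite divr_gt0 // ltr_wpDl.
pose d := Num.min (x ord0 + y ord0) (powR q s^-1).
have d0 : 0 < d by rewrite lt_min pos powR_gt0.
pose t0 := d - y ord0.
have ymono : forall j, y ord0 <= y j.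
  move=> j; case: (posnP j) => h; first by have -> : j = ord0 by apply: val_inj.
  by apply/ltW/yinc.
have t0pos : forall t, t0 <= t -> forall j, 0 < t + y j.
  move=> t ht j; apply: (lt_le_trans d0); rewrite -(subrK (y ord0) d).
  by apply: lerD => //.
have ft0 : 0 < f t0.
  rewrite /f big_ord_recl /= {1}/t0 subrK.
  have hA : B + 1 <= C ord0 * powR d (-s).
    have hd : powR d s <= q.
      have -> : q = powR (powR q s^-1) s by rewrite -powRrM mulVf ?gt_eqF // powRr1 // ltW.
      apply: ge0_ler_powR; [exact: ltW | by rewrite nnegrE ltW | by rewrite nnegrE powR_ge0 | by rewrite ge_min lexx orbT].
    rewrite powRN.
    have : q^-1 <= (powR d s)^-1 by rewrite lef_pV2 ?posrE ?powR_gt0.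
    move=> /(ler_wpM2l (ltW C0)); congr (_ <= _).
    by rewrite /q invf_div mulrC divfK // gt_eqF.
  have hS : - B <= \sum_(i<k) C (lift ord0 i) * powR (t0 + y (lift ord0 i)) (-s).
    rewrite /B -sumrN; apply: ler_sum => j _.
    have yj : 0 < y (lift ord0 j) - y ord0 by rewrite subr_gt0 yinc.
    have tj : 0 < t0 + y (lift ord0 j) by apply: t0pos.
    have hP : powR (t0 + y (lift ord0 j)) (-s) <= powR (y (lift ord0 j) - y ord0) (-s).
      rewrite !powRN lef_pV2 ?posrE ?powR_gt0 //.
      apply: ge0_ler_powR; rewrite ?nnegrE ?ltW //.
      by rewrite /t0; lra.
    have h0 : 0 <= powR (t0 + y (lift ord0 j)) (-s) := powR_ge0 _ _.
    have hc : - `|C (lift ord0 j)| <= C (lift ord0 j) by rewrite lerNl ler_normr lexx orbT.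
    have hc0 : 0 <= `|C (lift ord0 j)| := normr_ge0 _.
    move: hP h0 hc hc0.
    set P := powR _ _; set Q := powR _ _; set c := C _; set a := `|c|.
    move=> *; nra.
  lra.
have t0x : t0 <= x ord0 by rewrite /t0 lerBlDr ge_min lexx.
have [zz zzI fzz] : exists2 zz, zz \in `[t0, x ord0] & f zz = 0.
  apply: IVT => //.
    apply: derivable_within_continuous => u; rewrite in_itv /= => /andP[h1 _].
    by apply: fder; apply: t0pos.
  by apply/andP; split; [rewrite ge_min fle orbT | rewrite le_max (ltW ft0)].
move: zzI; rewrite in_itv /= => /andP[zz1 zz2].
pose z := fun i : 'I_k.+1 => if i == ord0 then zz else x i.
have := ZC (c := C) (y := y) (z := z) s0 (yinj_of yinc).
move=> /(_ _ _ _ ord0) H.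
suff : C ord0 = 0 by move=> h; move: C0; rewrite h ltxx.
apply: H.
- move=> i j ij; rewrite /z; have -> : (j == ord0) = false.
    by apply/negbTE; apply/eqP => h; move: ij; rewrite h.
  case: eqP => [i0 | /eqP i0]; last exact: xinc.
  by apply: (le_lt_trans zz2); apply: xinc; move: ij; rewrite i0.
- move=> i j; rewrite /z; case: eqP => _; [exact: t0pos | exact: pos].
- move=> i; rewrite /z; case: eqP => [_|/eqP i0]; first exact: fzz.
  exact: fz.
Qed.

Lemma det_rowsub n (A : 'M[R]_n) (i1 i2 : 'I_n) : i1 != i2 ->
  \det A = \det (\matrix_(i, j) if i == i1 then A i1 j - A i2 j else A i j).
Proof.
move=> ne.
pose B := \matrix_(i, j) if i == i1 then A i1 j - A i2 j else A i j.
pose C := \matrix_(i, j) if i == i1 then A i2 j else A i j.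
have dC : \det C = 0.
  apply: (determinant_alternate ne) => j; rewrite !mxE eqxx.
  by rewrite eq_sym (negbTE ne).
rewrite (@determinant_multilinear _ _ A B C i1 1 1).
- by rewrite dC mulr0 addr0 mul1r.
- by apply/rowP => j; rewrite !mxE eqxx !mul1r subrK.
- by apply/matrixP => a b; rewrite !mxE eq_sym (negbTE (neq_lift _ _)).
- by apply/matrixP => a b; rewrite !mxE eq_sym (negbTE (neq_lift _ _)).
Qed.

Lemma det_row0 n (A : 'M[R]_n.+1) : (forall j, j != ord0 -> A ord0 j = 0) ->
  \det A = A ord0 ord0 * \det (row' ord0 (col' ord0 A)).
Proof.
move=> h; rewrite (expand_det_row _ ord0) big_ord_recl big1 ?addr0.
  by rewrite /cofactor /= expr0 mul1r.
by move=> j _; rewrite h ?mul0r // eq_sym neq_lift.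
Qed.

Lemma GL (m : nat) (p q : 'I_m.+2 -> R) :
  (forall i j : 'I_m.+2, (i <= j)%N -> p j <= p i) ->
  0 <= \det (\matrix_(i, j) Num.min (p (lift ord0 i)) (q (lift ord0 j))) ->
  (forall j, j != ord0 -> Num.min (p ord0) (q j) = Num.min (p (lift ord0 ord0)) (q j)) ->
  0 <= \det (\matrix_(i, j) Num.min (p i) (q j)).
Proof.
move=> pm IH hc.
rewrite (@det_rowsub _ _ ord0 (lift ord0 ord0)) ?neq_lift // det_row0.
  apply: mulr_ge0.
    rewrite !mxE eqxx subr_ge0 le_min !ge_min lexx orbT andbT.
    by rewrite pm.
  by move: IH; congr (0 <= \det _); apply/matrixP => a b; rewrite !mxE eq_sym (negbTE (neq_lift _ _)).
by move=> j j0; rewrite !mxE eqxx hc // subrr.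
Qed.

Lemma MK (k : nat) : forall (a b : 'I_k -> R),
  (forall i, 0 <= a i) -> (forall j, 0 <= b j) ->
  (forall i j : 'I_k, (i <= j)%N -> a j <= a i) ->
  (forall i j : 'I_k, (i <= j)%N -> b j <= b i) ->
  0 <= \det (\matrix_(i, j) Num.min (a i) (b j)).
Proof.
elim: k => [|k IH] a b a0 b0 am bm; first by rewrite det_mx00.
case: k IH a b a0 b0 am bm => [|m] IH a b a0 b0 am bm.
  by rewrite det_mx11 mxE le_min a0 b0.
pose o : 'I_m.+2 := ord0; pose e : 'I_m.+2 := lift ord0 ord0.
have liftm : forall i j : 'I_m.+1, (i <= j)%N -> (lift ord0 i <= lift ord0 j)%N.
  by move=> i j; rewrite /= /bump /= !add1n.
have ge1 : forall j : 'I_m.+2, j != ord0 -> (e <= j)%N.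
  by move=> j; rewrite -lt0n.
case: (leP (b e) (a e)) => hba.
  apply: GL => //.
    by apply: IH => // i j ij; [apply: am|apply: bm]; apply: liftm.
  move=> j j0.
  have bj : b j <= a e by apply: le_trans hba; apply: bm; apply: ge1.
  have ae : a e <= a o by apply: am.
  rewrite (min_r bj) min_r //; exact: le_trans ae.
rewrite -det_tr.
have -> : (\matrix_(i, j) Num.min (a i) (b j))^T = \matrix_(i, j) Num.min (b i) (a j).
  by apply/matrixP => i j; rewrite !mxE minC.
apply: GL => //.
  by apply: IH => // i j ij; [apply: bm|apply: am]; apply: liftm.
move=> j j0.
have aj : a j < b e by apply: le_lt_trans hba; apply: am; apply: ge1.
have be : b e <= b o by apply: bm.
rewrite (min_r (ltW aj)) min_r //; apply: ltW; exact: lt_le_trans be.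
Qed.

Lemma det_scale k (K : 'M[R]_k) (u v : 'I_k -> R) :
  \det (\matrix_(i, j) (u i * v j * K i j)) = (\prod_i u i) * (\prod_i v i) * \det K.
Proof.
have -> : \matrix_(i, j) (u i * v j * K i j) =
    diag_mx (\row_i u i) *m K *m diag_mx (\row_j v j).
  by apply/matrixP => i j; rewrite mul_mx_diag mul_diag_mx !mxE; ring.
rewrite !det_mulmx !det_diag.
under eq_bigr do rewrite mxE.
under [X in _ * _ * X = _]eq_bigr do rewrite mxE.
ring.
Qed.

Lemma incr_le n k (f : 'I_k -> 'I_n) : strictly_incr f ->
  forall i j : 'I_k, (i <= j)%N -> (f i <= f j)%N.
Proof.
move=> hf i j; rewrite leq_eqVlt => /orP[/eqP/val_inj -> //|/hf/ltnW //].
Qed.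

Lemma TPk n (A : 'M[R]_n) (u v x : 'I_n -> R) (s : R) : 0 < s ->
  (forall i, 0 < u i) -> (forall i, 0 < v i) -> (forall i, 0 < x i) ->
  (forall i j : 'I_n, (i < j)%N -> x i < x j) ->
  (forall i j, A i j = u i * v j * powR (x i + x j) (-s)) -> totally_positive A.
Proof.
move=> s0 u0 v0 x0 xinc hA k f g _ hf hg; rewrite /minor.
have -> : \matrix_(i, j) A (f i) (g j) = \matrix_(i, j) (u (f i) * v (g j) *
    (\matrix_(a, b) powR (x (f a) + x (g b)) (-s)) i j).
  by apply/matrixP => i j; rewrite !mxE hA.
rewrite det_scale; apply: mulr_gt0; first by apply: mulr_gt0; apply: prodr_gt0.
apply: CT => //.
- by move=> i j ij; apply/xinc/hf.
- by move=> i j ij; apply/xinc/hg.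
- by move=> i j; rewrite addr_gt0.
Qed.

Lemma TNr1 n (A : 'M[R]_n) (u : 'I_n -> R) :
  (forall i, 0 <= u i) -> (forall i j, A i j = u i * u j) -> totally_nonnegative A.
Proof.
move=> u0 hA k f g _ hf hg; rewrite /minor.
have -> : \matrix_(i, j) A (f i) (g j) = \matrix_(i, j) (u (f i) * u (g j) *
    (\matrix_(a, b) (1 : R) : 'M_k) i j).
  by apply/matrixP => i j; rewrite !mxE hA mulr1.
rewrite det_scale; apply: mulr_ge0; first by apply: mulr_ge0; apply: prodr_ge0.
case: k f g hf hg => [|[|k]] f g _ _; first by rewrite det_mx00.
  by rewrite det_mx11 mxE.
rewrite (@determinant_alternate _ _ _ ord0 (lift ord0 ord0)) ?neq_lift //.
by move=> j; rewrite !mxE.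
Qed.

Lemma TNmin n (A : 'M[R]_n) (w : 'I_n -> R) :
  (forall i, 0 <= w i) -> (forall i j : 'I_n, (i <= j)%N -> w j <= w i) ->
  (forall i j, A i j = Num.min (w i) (w j)) -> totally_nonnegative A.
Proof.
move=> w0 wm hA k f g _ hf hg; rewrite /minor.
have -> : \matrix_(i, j) A (f i) (g j) = \matrix_(i, j) Num.min (w (f i)) (w (g j)).
  by apply/matrixP => i j; rewrite !mxE hA.
apply: MK => // i j ij; apply: wm; [exact: incr_le hf _ _ ij| exact: incr_le hg _ _ ij].
Qed.

Lemma powRV (x r : R) : 0 < x -> powR (x^-1) r = powR x (-r).
Proof.
move=> x0; rewrite /powR (gt_eqF x0) gt_eqF ?invr_gt0 //.
by rewrite lnV ?posrE // mulrN mulNr.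
Qed.

Lemma two_gt0' : (0 : R) < 2^-1. Proof. by rewrite invr_gt0. Qed.

Lemma E1 (a b r : R) : 0 < a -> 0 < b ->
  (powR (amean a b) r)^-1 = powR 2^-1 (-r) * 1 * powR (a + b) (-r).
Proof.
move=> a0 b0; rewrite /amean powRM ?addr_ge0 ?ltW ?two_gt0' //.
by rewrite invfM -!powRN mulr1 mulrC.
Qed.

Lemma E2 (a b r : R) : 0 < a -> 0 < b ->
  powR (hmean a b) r = powR (2 * a) r * powR b r * powR (a + b) (-r).
Proof.
move=> a0 b0; rewrite /hmean powRM ?mulr_ge0 ?invr_ge0 ?addr_ge0 ?ltW //.
by rewrite powRM ?mulr_ge0 ?ltW // powRV // addr_gt0.
Qed.

Lemma heinz_form (nu p u a b : R) : 0 < a -> 0 < b ->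
  (nu = p /\ 1 - nu = p + u) \/ (nu = p + u /\ 1 - nu = p) ->
  heinz nu a b = powR a p * powR b p * (powR a u + powR b u) * 2^-1.
Proof.
move=> a0 b0 h; rewrite /heinz.
have Ea : powR a (p + u) = powR a p * powR a u by rewrite powRD // (gt_eqF a0) implybT.
have Eb : powR b (p + u) = powR b p * powR b u by rewrite powRD // (gt_eqF b0) implybT.
case: h => [[-> ->]|[-> ->]]; rewrite ?Ea ?Eb; ring.
Qed.

Lemma E3 (nu p u a b r : R) : 0 < a -> 0 < b ->
  (nu = p /\ 1 - nu = p + u) \/ (nu = p + u /\ 1 - nu = p) ->
  (powR (heinz nu a b) r)^-1 =
  (powR (powR a p) (-r) * powR 2^-1 (-r)) * powR (powR b p) (-r) *
     powR (powR a u + powR b u) (-r).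
Proof.
move=> a0 b0 h; rewrite (heinz_form a0 b0 h).
have ha := powR_ge0 a p; have hb := powR_ge0 b p.
have hs : 0 <= powR a u + powR b u by rewrite addr_ge0 ?powR_ge0.
rewrite (powRM r (mulr_ge0 (mulr_ge0 ha hb) hs) (ltW two_gt0')).
rewrite (powRM r (mulr_ge0 ha hb) hs) (powRM r ha hb).
rewrite !invfM !powRN.
move: (powR (powR a p) r) (powR (powR b p) r) (powR (powR a u + powR b u) r) (powR 2^-1 r) => X Y Z W.
ring.
Qed.

Lemma E4 (al a b r : R) : 0 < a -> 0 < b ->
  (powR (binmean al a b) r)^-1 =
  powR 2^-1 (- (al^-1 * r)) * 1 * powR (powR a al + powR b al) (- (al^-1 * r)).
Proof.
move=> a0 b0; rewrite /binmean -powRrM.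
rewrite powRM ?addr_ge0 ?powR_ge0 ?(ltW two_gt0') //.
by rewrite invfM -!powRN mulr1 mulrC.
Qed.

Lemma E5 (a b r : R) : 0 < a -> 0 < b ->
  (powR (heinz 2^-1 a b) r)^-1 = powR (powR a 2^-1) (-r) * powR (powR b 2^-1) (-r).
Proof.
move=> a0 b0; rewrite /heinz.
have -> : (1 - 2^-1 : R) = 2^-1 by lra.
have -> : (powR a 2^-1 * powR b 2^-1 + powR a 2^-1 * powR b 2^-1) / 2 =
   powR a 2^-1 * powR b 2^-1.
  move: (powR a 2^-1 * powR b 2^-1) => X; lra.
by rewrite powRM ?powR_ge0 // invfM -!powRN.
Qed.

Lemma E6 (a b r : R) : 0 < a -> 0 < b ->
  (powR (binmean0 a b) r)^-1 = powR (Num.sqrt a) (-r) * powR (Num.sqrt b) (-r).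
Proof.
move=> a0 b0; rewrite /binmean0 sqrtrM ?ltW //.
by rewrite powRM ?sqrtr_ge0 // invfM -!powRN.
Qed.

Lemma E7 (a b r : R) : 0 < a -> 0 < b -> 0 < r ->
  (powR (binmeanInf a b) r)^-1 = Num.min (powR a (-r)) (powR b (-r)).
Proof.
move=> a0 b0 r0; rewrite /binmeanInf !powRN.
have mono : forall x y : R, 0 < x -> x <= y -> (powR y r)^-1 <= (powR x r)^-1.
  move=> x y x0 xy; rewrite lef_pV2 ?posrE ?powR_gt0 //; last exact: lt_le_trans xy.
  apply: ge0_ler_powR => //; rewrite ?nnegrE; [exact: ltW | exact: ltW | exact: ltW (lt_le_trans x0 xy)].
case: (leP a b) => h.
  by rewrite (min_r (mono _ _ a0 h)).
by rewrite (min_l (mono _ _ b0 (ltW h))).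
Qed.
End S.

Theorem theorem3p2 (R : realType) (n : nat) (lam : 'I_n -> R) (r : R) :
  (forall i, 0 < lam i) ->
  (forall i j : 'I_n, (i < j)%N -> lam i < lam j) ->
  0 < r ->
  totally_positive (\matrix_(i, j) (powR (amean (lam i) (lam j)) r)^-1) /\
      totally_positive (\matrix_(i, j) powR (hmean (lam i) (lam j)) r) /\
      (forall nu : R, 0 <= nu <= 1 -> nu != 2^-1 ->
         totally_positive (\matrix_(i, j) (powR (heinz nu (lam i) (lam j)) r)^-1)) /\
      (forall alpha : R, 0 < alpha ->
         totally_positive (\matrix_(i, j) (powR (binmean alpha (lam i) (lam j)) r)^-1)) /\
      totally_nonnegative (\matrix_(i, j) (powR (heinz 2^-1 (lam i) (lam j)) r)^-1) /\
      totally_nonnegative (\matrix_(i, j) (powR (binmean0 (lam i) (lam j)) r)^-1) /\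
      totally_nonnegative (\matrix_(i, j) (powR (binmeanInf (lam i) (lam j)) r)^-1).
Proof.
move=> lpos linc r0.
have lnn : forall i, 0 <= lam i by move=> i; exact: ltW.
have t2 := @two_gt0' R.
split.
  apply: (TPk (u := fun _ => powR 2^-1 (-r)) (v := fun _ => 1) (x := lam) (s := r)) => //.
  - by move=> i; rewrite powR_gt0.
  - by move=> i j; rewrite mxE E1.
split.
  apply: (TPk (u := fun i => powR (2 * lam i) r) (v := fun j => powR (lam j) r) (x := lam) (s := r)) => //.
  - by move=> i; apply: powR_gt0; rewrite mulr_gt0.
  - by move=> i; exact: powR_gt0.
  - by move=> i j; rewrite mxE E2.
split.
  move=> nu /andP[nu0 nu1] nuh.
  have [p [u [u0 hpu]]] : exists p u, 0 < u /\
      ((nu = p /\ 1 - nu = p + u) \/ (nu = p + u /\ 1 - nu = p)).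
    case: (ltgtP nu 2^-1) => h.
    - by exists nu, (1 - 2 * nu); split; [lra | left; split => //; lra].
    - by exists (1 - nu), (2 * nu - 1); split; [lra | right; split => //; lra].
    - by move: nuh; rewrite h eqxx.
  apply: (TPk (u := fun i => powR (powR (lam i) p) (-r) * powR 2^-1 (-r))
     (v := fun j => powR (powR (lam j) p) (-r)) (x := fun i => powR (lam i) u) (s := r)) => //.
  - by move=> i; rewrite mulr_gt0 // !powR_gt0.
  - by move=> i; rewrite !powR_gt0.
  - by move=> i; rewrite !powR_gt0.
  - by move=> i j ij; apply: gt0_ltr_powR; rewrite ?nnegrE ?lnn ?linc.
  - by move=> i j; rewrite mxE (E3 _ _ _ hpu).
split.
  move=> al al0.
  apply: (TPk (u := fun _ => powR 2^-1 (-(al^-1 * r))) (v := fun _ => 1)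
     (x := fun i => powR (lam i) al) (s := al^-1 * r)) => //.
  - by rewrite mulr_gt0 ?invr_gt0.
  - by move=> i; rewrite !powR_gt0.
  - by move=> i; rewrite !powR_gt0.
  - by move=> i j ij; apply: gt0_ltr_powR; rewrite ?nnegrE ?lnn ?linc.
  - by move=> i j; rewrite mxE E4.
split.
  apply: (TNr1 (u := fun i => powR (powR (lam i) 2^-1) (-r))).
  - by move=> i; apply: powR_ge0.
  - by move=> i j; rewrite mxE E5.
split.
  apply: (TNr1 (u := fun i => powR (Num.sqrt (lam i)) (-r))).
  - by move=> i; apply: powR_ge0.
  - by move=> i j; rewrite mxE E6.
apply: (TNmin (w := fun i => powR (lam i) (-r))).
- by move=> i; apply: powR_ge0.
- move=> i j; rewrite leq_eqVlt => /orP[/eqP/val_inj -> //|ij].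
  rewrite !powRN lef_pV2 ?posrE ?powR_gt0 //.
  by apply: ge0_ler_powR; rewrite ?nnegrE ?lnn ?ltW ?linc.
- by move=> i j; rewrite mxE E7.
Qed.
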